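(* Let $s\in[\tfrac12,1)$, $m\ge1$, and let $\alpha_s,\beta_s>0$ be constants depending only on $s$. Define $\Xi_s$ on $\{(q_1,\dots,q_m)\}$ by \[ \Xi_s=\sum_{i=1}^m\Big(\alpha_sU(2q_i)+\beta_s\varepsilon^{2s-1}|2q_i|^{2s-1}\Big)+\sum_{i\neq j}\Big(\alpha_sU(q_i-q_j)+\beta_s\varepsilon^{2s-1}|q_i-q_j|^{2s-1}\Big)+\sum_{i\neq j}\Big(\alpha_sU(q_i+q_j)+\beta_s\varepsilon^{2s-1}|q_i+q_j|^{2s-1}\Big) \] for $s\in(\frac12,1)$, and \[ \Xi_{\frac12}=\sum_{i=1}^m\Big(\alpha_{\frac12}U(2q_i)+\tfrac{\beta_{\frac12}}{\log\frac1\varepsilon}\log|2q_i|\Big)+\sum_{i\neq j}\Big(\alpha_{\frac12}U(q_i-q_j)+\tfrac{\beta_{\frac12}}{\log\frac1\varepsilon}\log|q_i-q_j|\Big)+\sum_{i\neq j}\Big(\alpha_{\frac12}U(q_i+q_j)+\tfrac{\beta_{\frac12}}{\log\frac1\varepsilon}\log|q_i+q_j|\Big) \] for $s=\frac12$ (sums over ordered pairs $i\ne j$). Then, provided $\eta>0$ is sufficiently small (and $\varepsilon>0$ is sufficiently small), $\Xi_s$ admits a global minimum point over $\overline{Q_{s,\eta}}$ lying in the interior of $Q_{s,\eta}$.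
   Context: $U$ is the unique positive even solution of $(-\Delta)^sU+U-U^2=0$ in $\mathbb{R}$ vanishing at infinity ($(-\Delta)^s$ the fractional Laplacian with Fourier symbol $|\xi|^{2s}$); it satisfies $U(x)=\mathfrak b_s|x|^{-1-2s}(1+o(1))$ as $|x|\to\infty$ for some $\mathfrak b_s>0$. For $\eta>0$, $Q_{s,\eta}$ is the set of $(q_1,\dots,q_m)$ with $\frac1\eta\ell_\varepsilon>q_i>\eta\ell_\varepsilon$ for all $i$ and $|q_i-q_j|>\eta\ell_\varepsilon$ for $i\ne j$, where $\ell_\varepsilon=\varepsilon^{\frac{1-2s}{4s}}$ if $s\in(\frac12,1)$ and $\ell_\varepsilon=(\log\frac1\varepsilon)^{1/2}$ if $s=\frac12$. *)

(* Defs.v *)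
From HB Require Import structures.
From mathcomp Require Import all_boot all_order all_algebra.
From mathcomp Require Import all_classical all_reals all_analysis.
Set Implicit Arguments. Unset Strict Implicit. Unset Printing Implicit Defensive.
Import Order.TTheory GRing.Theory Num.Theory.
Import numFieldNormedType.Exports.
Local Open Scope classical_set_scope.
Local Open Scope ring_scope.

Section Defs.
Variable R : realType.

(* Properties of the ground state U used in the paper: U is continuous,
   even, positive and U(x) = b |x|^{-1-2s} (1 + o(1)) as |x| -> oo,
   i.e. U(x) |x|^{1+2s} -> b (as x -> +oo; the case x -> -oo follows from evenness). *)
Definition ground_state_props (s : R) (U : R -> R) (b : R) : Prop :=
  [/\ continuous U,
      (forall x, U (- x) = U x),
      (forall x, 0 < U x),
      0 < b &
      (fun x => U x * `|x| `^ (1 + 2 * s)) @ +oo --> b].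

Definition ell (s eps : R) : R :=
  if s == 2^-1 then Num.sqrt (ln eps^-1)
  else eps `^ ((1 - 2 * s) / (4 * s)).

Definition Qset (m : nat) (s eta eps : R) : set 'rV[R]_m :=
  [set q | (forall i, eta * ell s eps < q ord0 i < eta^-1 * ell s eps) /\
           (forall i j, i != j -> eta * ell s eps < `|q ord0 i - q ord0 j|)].

Definition phi (s beta eps x : R) : R :=
  if s == 2^-1 then beta / ln eps^-1 * ln `|x|
  else beta * eps `^ (2 * s - 1) * `|x| `^ (2 * s - 1).

Definition Xi (m : nat) (s alpha beta : R) (U : R -> R) (eps : R)
    (q : 'rV[R]_m) : R :=
  \sum_(i < m) (alpha * U (2 * q ord0 i) + phi s beta eps (2 * q ord0 i))
  + \sum_(i < m) \sum_(j < m | j != i)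
      (alpha * U (q ord0 i - q ord0 j) + phi s beta eps (q ord0 i - q ord0 j))
  + \sum_(i < m) \sum_(j < m | j != i)
      (alpha * U (q ord0 i + q ord0 j) + phi s beta eps (q ord0 i + q ord0 j)).

End Defs.

(* Main.v *)
Require Import Defs.
From HB Require Import structures.
From mathcomp Require Import all_boot all_order all_algebra.
From mathcomp Require Import all_classical all_reals all_analysis.
Import Order.TTheory GRing.Theory Num.Theory.
Import numFieldNormedType.Exports.
Local Open Scope classical_set_scope.
Local Open Scope ring_scope.
From mathcomp Require Import lra ring.
Set Implicit Arguments. Unset Strict Implicit.

Lemma powR_posE (R : realType) (a r : R) : 0 < a -> a `^ r = expR (r * ln a).
Proof. by move=> a0; rewrite /powR gt_eqF. Qed.

Definition Pw (R : realType) (s t : R) : R := expR (- (1 + 2 * s) * ln t).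
Definition hh (R : realType) (s t : R) : R :=
  if s == 2^-1 then ln t else expR ((2 * s - 1) * ln t).
Definition cc (R : realType) (s : R) : R := if s == 2^-1 then 1 else 2 * s - 1.

Lemma cc_gt0 (R : realType) (s : R) : 2^-1 <= s < 1 -> 0 < cc s <= 1.
Proof.
move=> /andP[h1 h2]; rewrite /cc; case: eqP => [_|/eqP hs]; first by rewrite ltr01 lexx.
have h : 2^-1 < s by rewrite lt_neqAle eq_sym hs h1.
have h' : 1 < 2 * s.
  by move: h; rewrite -(ltr_pM2l (_ : (0:R) < 2)) // mulfV // pnatr_eq0.
apply/andP; split; lra.
Qed.

Lemma hh_ge_ln (R : realType) (s t : R) : 0 < t -> cc s * ln t <= hh s t.
Proof.
move=> t0; rewrite /hh /cc; case: eqP => _; first by rewrite mul1r.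
by apply: le_trans (expR_ge1Dx _); rewrite lerDr.
Qed.

Lemma ln_ge_inv (R : realType) (t : R) : 0 < t -> - t^-1 <= ln t.
Proof.
move=> t0; have := @ln_sublinear R t^-1; rewrite invr_gt0 lnV ?posrE // => /(_ t0).
by move=> h; rewrite lerNl ltW.
Qed.

Lemma hh_ge_inv (R : realType) (s t : R) : 2^-1 <= s < 1 -> 0 < t -> - t^-1 <= hh s t.
Proof.
move=> hs t0; have [c0 c1] : 0 < cc s /\ cc s <= 1 by apply/andP; apply: cc_gt0.
apply: le_trans (hh_ge_ln s t0).
have [l0|l0] := leP 0 (ln t).
  apply: le_trans (_ : 0 <= _); first by rewrite oppr_le0 invr_ge0 ltW.
  exact: mulr_ge0 (ltW c0) l0.
apply: le_trans (ln_ge_inv t0) _.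
rewrite -[X in X <= _]mul1r ler_wnM2r //; exact: ltW.
Qed.

Lemma hh_le (R : realType) (s t : R) : 2^-1 <= s < 1 -> 1 <= t -> hh s t <= t.
Proof.
move=> /andP[h1 h2] t1; have t0 : 0 < t by apply: lt_le_trans t1.
rewrite /hh; case: eqP => _; first exact/ltW/ln_sublinear.
rewrite -{2}(lnK t0) ler_expR -[X in _ <= X]mul1r ler_wpM2r //.
  exact: ln_ge0.
lra.
Qed.

Lemma Pw_ge0 (R : realType) (s t : R) : 0 <= Pw s t.
Proof. exact/ltW/expR_gt0. Qed.

Lemma Pw_le1 (R : realType) (s t : R) : 0 <= s -> 1 <= t -> Pw s t <= 1.
Proof.
move=> s0 t1; rewrite /Pw -[X in _ <= X]expR0 ler_expR mulNr oppr_le0.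
apply: mulr_ge0; [lra| exact: ln_ge0].
Qed.

Lemma Pw_ge (R : realType) (s t : R) : 2^-1 <= s -> 0 < t -> t <= 1 -> (t ^+ 2)^-1 <= Pw s t.
Proof.
move=> s0 t0 t1; have -> : (t ^+ 2)^-1 = expR (- 2 * ln t).
  by rewrite mulNr expRN mulr_natl -lnXn // lnK // posrE exprn_gt0.
rewrite /Pw ler_expR !mulNr lerN2 -[X in _ <= X]opprK -[X in X <= _]opprK lerN2.
rewrite -!mulrN ler_wpM2r //; last by [lra]; rewrite oppr_ge0; exact: ln_le0.
Qed.

Lemma Pw_mul (R : realType) (s x L : R) : 0 < x -> 0 < L -> Pw s x = Pw s L * Pw s (x / L).
Proof.
move=> x0 L0; rewrite /Pw -expRD ln_div ?posrE //; congr expR; ring.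
Qed.

Lemma lninv_gt0 (R : realType) (e : R) : 0 < e < 1 -> 0 < ln e^-1.
Proof.
move=> /andP[e0 e1]; apply: ln_gt0; rewrite invf_gt1 //.
Qed.

Lemma ell_pos (R : realType) (s e : R) : 0 < e < 1 -> 0 < ell s e.
Proof.
move=> he; rewrite /ell; case: ifP => _.
  by rewrite sqrtr_gt0 lninv_gt0.
by case/andP: he => e0 _; rewrite powR_gt0.
Qed.

Definition cL (R : realType) (s beta L : R) : R := if s == 2^-1 then beta * ln L else 0.

Lemma phi_scale (R : realType) (s beta e x : R) : 2^-1 <= s < 1 -> 0 < e < 1 -> 0 < x ->
  phi s beta e x = Pw s (ell s e) * (cL s beta (ell s e) + beta * hh s (x / ell s e)).
Proof.
move=> hs he x0; have L0 := ell_pos s he.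
have [e0 e1] : 0 < e /\ e < 1 by apply/andP.
rewrite /phi /cL /hh (gtr0_norm x0) ln_div ?posrE //.
case: eqP => [s12|s12].
  have lnL : ln (ell s e) *+ 2 = ln (ln e^-1).
    rewrite -lnXn // /ell s12 eqxx sqr_sqrtr //; exact/ltW/lninv_gt0.
  have PL : Pw s (ell s e) = (ln e^-1)^-1.
    have -> : ln e^-1 = expR (ln (ell s e) *+ 2).
      by rewrite lnL lnK // posrE lninv_gt0.
    by rewrite /Pw s12 -expRN; congr expR; rewrite mulr2n; field.
  by rewrite PL; field; rewrite gt_eqF // lninv_gt0.
have ellE : ell s e = expR ((1 - 2 * s) / (4 * s) * ln e).
  by rewrite /ell; case: eqP => // _; rewrite powR_posE.
have s0 : s != 0 by apply/eqP => h; move: hs; rewrite h; lra.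
rewrite add0r /Pw !powR_posE // mulrCA -mulrA; congr (_ * _); rewrite -!expRD.
rewrite ellE expRK; congr expR; field.
by [].
Qed.

Lemma ell_large (R : realType) (s T : R) : 2^-1 <= s < 1 -> 0 < T ->
  exists2 e0 : R, 0 < e0 & forall e, 0 < e < e0 -> e < 1 /\ T < ell s e.
Proof.
move=> hs T0; rewrite /ell; case: eqP => [s12|s12].
  exists (expR (- T ^+ 2)); first exact: expR_gt0.
  move=> e /andP[e0 ee0].
  have e1 : e < 1.
    apply: lt_le_trans ee0 _; rewrite -[X in _ <= X]expR0 ler_expR oppr_le0.
    exact: sqr_ge0.
  split => //.
  have h : T ^+ 2 < ln e^-1.
    rewrite -[X in X < _]expRK ltr_ln ?posrE ?expR_gt0 ?invr_gt0 //.
    by rewrite -[X in X < _]invrK ltf_pV2 ?posrE ?invr_gt0 ?expR_gt0 // -expRN.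
  rewrite -[X in X < _](gtr0_norm T0) -sqrtr_sqr.
  by rewrite ltr_sqrt // (le_lt_trans _ h) // sqr_ge0.
have s0 : 2^-1 < s by case/andP: hs => h1 _; rewrite lt_neqAle h1 andbT; apply/eqP => h; apply: s12.
have s00 : 0 < s by apply: lt_trans s0; rewrite invr_gt0.
set a := (1 - 2 * s) / (4 * s).
have a0 : a < 0.
  rewrite /a pmulr_llt0 ?invr_gt0 ?mulr_gt0 //.
  move: s0; rewrite -(ltr_pM2l (_ : (0:R) < 2)) // mulfV ?pnatr_eq0 //; lra.
exists (Num.min 1 (expR (ln T / a))).
  by rewrite lt_min ltr01 expR_gt0.
move=> e /andP[e0]; rewrite lt_min => /andP[e1 ea]; split => //.
rewrite powR_posE //.
have : ln e < ln T / a.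
  by rewrite -[X in _ < X]expRK ltr_ln ?posrE ?expR_gt0.
rewrite -(ltr_nM2l a0) mulrC divfK ?lt_eqF // => h.
by rewrite -[X in X < _]lnK ?posrE // ltr_expR.
Qed.

Lemma U_bounds (R : realType) (s : R) U b : ground_state_props s U b -> 0 <= s ->
  exists X0 : R, 1 <= X0 /\ forall x, X0 <= x -> b / 2 * Pw s x <= U x <= 2 * b * Pw s x.
Proof.
case=> _ _ _ b0 /cvgrPdist_lt /(_ (b / 2)) h s0.
have : 0 < b / 2 by rewrite divr_gt0.
move=> /h [M [Mr HM]].
exists (Num.max 1 (M + 1)); split; first by rewrite le_max lexx.
move=> x; rewrite ge_max => /andP[x1 xM].
have x0 : 0 < x by apply: lt_le_trans x1.
have /HM : M < x by apply: lt_le_trans xM; rewrite ltrDl.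
rewrite /= (gtr0_norm x0) powR_posE //.
have -> : expR ((1 + 2 * s) * ln x) = (Pw s x)^-1 by rewrite /Pw mulNr expRN invrK.
have P0 : 0 < Pw s x by exact: expR_gt0.
set u := U x; move=> hu.
have hu' : b / 2 < u / Pw s x < 3 * b / 2.
  move: hu; rewrite ltr_norml; case/andP => h1 h2; apply/andP; split; lra.
case/andP: hu' => h1 h2.
have -> : u = u / Pw s x * Pw s x by rewrite divfK // gt_eqF.
apply/andP; split; first by rewrite ler_pM2r // ltW.
rewrite ler_pM2r //; apply: ltW (lt_le_trans h2 _); lra.
Qed.

Lemma num_lb (R : realType) (a beta s t : R) : 0 < a -> 0 < beta -> 2^-1 <= s < 1 -> 0 < t ->
  - (beta + beta ^+ 2 / (4 * a)) <= a * Pw s t + beta * hh s t.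
Proof.
move=> a0 b0 hs t0.
have hh1 := hh_ge_inv hs t0.
have hb : - (beta / t) <= beta * hh s t.
  by rewrite -mulrN ler_pM2l // -[X in X <= _]mul1r.
set k := beta ^+ 2 / (4 * a).
have k0 : 0 <= k by rewrite /k divr_ge0 ?sqr_ge0 // mulr_ge0 // ltW.
have hk : 4 * a * k = beta ^+ 2 by rewrite /k mulrC divfK // mulf_neq0 ?gt_eqF.
have [t1|t1] := leP t 1.
  have hP := Pw_ge (proj1 (andP hs)) t0 t1.
  set u := t^-1.
  have u0 : 0 < u by rewrite invr_gt0.
  have hP' : u ^+ 2 <= Pw s t by rewrite /u exprVn.
  have hb' : - (beta * u) <= beta * hh s t by [].
  have : 0 <= a * u ^+ 2 - beta * u + k.
    have sq : 0 <= (2 * a * u - beta) ^+ 2 := sqr_ge0 _.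
    nra.
  have : a * u ^+ 2 <= a * Pw s t by rewrite ler_pM2l.
  lra.
have hP := Pw_ge0 s t.
have : beta / t <= beta.
  by rewrite ler_pdivrMr // ler_peMr // ltW.
have : 0 <= a * Pw s t by rewrite mulr_ge0 // ltW.
lra.
Qed.

Definition trm (R : realType) (s alpha beta : R) (U : R -> R) (e x : R) :=
  alpha * U x + phi s beta e x.

Lemma trm_est (R : realType) (s alpha beta b : R) (U : R -> R) (e X0 x : R) :
  2^-1 <= s < 1 -> 0 < alpha -> 0 < beta -> 0 < b -> 0 < e < 1 -> 1 <= X0 ->
  (forall x, X0 <= x -> b / 2 * Pw s x <= U x <= 2 * b * Pw s x) -> X0 <= x ->
  let L := ell s e in let S := Pw s L in let t := x / L in
  let a := alpha * b / 4 in let K := beta + beta ^+ 2 / (4 * a) in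
  [/\ S * (cL s beta L + a * Pw s t - K) <= trm s alpha beta U e x,
      S * (cL s beta L + beta * (cc s * ln t)) <= trm s alpha beta U e x &
      trm s alpha beta U e x <= S * (cL s beta L + 2 * alpha * b * Pw s t + beta * hh s t)].
Proof.
move=> hs a0 b0 bb0 he X1 hU xX L S t a K.
have x0 : 0 < x by apply: lt_le_trans (le_trans X1 xX).
have L0 : 0 < L := ell_pos s he.
have t0 : 0 < t by rewrite divr_gt0.
have S0 : 0 < S by exact: expR_gt0.
have PM : Pw s x = S * Pw s t := Pw_mul s x0 L0.
case/andP: (hU x xX); rewrite PM => hU1 hU2.
rewrite /trm phi_scale // -/L -/S -/t.
have aa0 : 0 < a by rewrite /a !mulr_gt0.
have hn := num_lb aa0 b0 hs t0.
have hP := Pw_ge0 s t.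
have hl := hh_ge_ln s t0.
have hl' : beta * (cc s * ln t) <= beta * hh s t by rewrite ler_pM2l.
have U1 : S * (2 * a * Pw s t) <= alpha * U x.
  apply: le_trans (_ : alpha * (b / 2 * (S * Pw s t)) <= _); last by rewrite ler_pM2l.
  by rewrite /a; rewrite le_eqVlt; apply/orP; left; apply/eqP; field.
have U2 : alpha * U x <= S * (2 * alpha * b * Pw s t).
  apply: le_trans (_ : alpha * (2 * b * (S * Pw s t)) <= _); first by rewrite ler_pM2l.
  by rewrite le_eqVlt; apply/orP; left; apply/eqP; ring.
split.
- apply: le_trans (_ : S * (2 * a * Pw s t) + S * (cL s beta L + beta * hh s t) <= _); last lra.
  rewrite -mulrDr ler_pM2l //; rewrite /K; lra.
- apply: le_trans (_ : S * (2 * a * Pw s t) + S * (cL s beta L + beta * hh s t) <= _); last lra.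
  rewrite -mulrDr ler_pM2l //; have : 0 <= a * Pw s t by rewrite mulr_ge0 // ltW.
  lra.
- apply: le_trans (_ : S * (2 * alpha * b * Pw s t) + S * (cL s beta L + beta * hh s t) <= _); first lra.
  by rewrite -mulrDr ler_pM2l //; lra.
Qed.

Lemma cont_sum (R : realType) (T : topologicalType) (I : Type) (r : seq I) (P : pred I)
  (F : I -> T -> R) : (forall i, continuous (F i)) ->
  continuous (fun x => \sum_(i <- r | P i) F i x).
Proof.
move=> hF x; elim: r => [|i r IH].
  rewrite (_ : (fun x => \sum_(j <- [::] | P j) F j x) = fun=> 0).
    exact: cvg_cst.
  by apply/funext => y; rewrite big_nil.
rewrite (_ : (fun x => \sum_(j <- i :: r | P j) F j x) =
   fun x => (if P i then F i x else 0) + \sum_(j <- r | P j) F j x).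
  apply: cvgD => //; case: (P i); [exact: hF | exact: cvg_cst].
by apply/funext => y; rewrite big_cons; case: (P i); rewrite ?add0r.
Qed.

Lemma closed_ge_fun (R : realType) (T : topologicalType) (f : T -> R) c :
  continuous f -> closed [set x | c <= f x].
Proof. by move/continuous_closedP => h; exact: (h _ (@closed_ge R c)). Qed.

Lemma closed_le_fun (R : realType) (T : topologicalType) (f : T -> R) c :
  continuous f -> closed [set x | f x <= c].
Proof. by move/continuous_closedP => h; exact: (h _ (@closed_le R c)). Qed.

Lemma coord_cont (R : realType) m (i : 'I_m) : continuous (fun q : 'rV[R]_m => q ord0 i).
Proof. exact: coord_continuous. Qed.

Lemma dist_cont (R : realType) m (i j : 'I_m) :
  continuous (fun q : 'rV[R]_m => `|q ord0 i - q ord0 j|).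
Proof.
move=> q.
apply: (@continuous_comp _ _ _ (fun q : 'rV[R]_m => q ord0 i - q ord0 j) (@Num.Def.normr R R)).
  by apply: (@cvgB _ _ _ (nbhs q) _ (fun q : 'rV[R]_m => q ord0 i) (fun q => q ord0 j)); exact: coord_cont.
exact: norm_continuous.
Qed.

Definition Kset (R : realType) m (s eta e : R) : set 'rV[R]_m :=
  [set q | (forall i, eta * ell s e <= q ord0 i <= eta^-1 * ell s e) /\
           (forall i j, i != j -> eta * ell s e <= `|q ord0 i - q ord0 j|)].
Arguments Kset {R} m s eta e.

Lemma closed_sub_key (T : topologicalType) (A C : set T) q :
  closed C -> A `<=` C -> closure A q -> C q.
Proof. by move=> cC hAC hcq; apply: cC; exact: (closureS hAC). Qed.

Lemma Kset_closed (R : realType) m (s eta e : R) : closed (Kset m s eta e).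
Proof.
move=> q hcq; split.
  move=> i; apply/andP; split.
    apply: (closed_sub_key (C := [set q : 'rV[R]_m | eta * ell s e <= q ord0 i]) _ _ hcq).
      exact/closed_ge_fun/coord_cont.
    by move=> p [/(_ i)/andP[]].
  apply: (closed_sub_key (C := [set q : 'rV[R]_m | q ord0 i <= eta^-1 * ell s e]) _ _ hcq).
    exact/closed_le_fun/coord_cont.
  by move=> p [/(_ i)/andP[]].
move=> i j ij.
apply: (closed_sub_key (C := [set q : 'rV[R]_m | eta * ell s e <= `|q ord0 i - q ord0 j|]) _ _ hcq).
  exact/closed_ge_fun/dist_cont.
by move=> p [_ /(_ i j ij)].
Qed.

Lemma Qset_Kset (R : realType) m (s eta e : R) : @Qset R m s eta e `<=` Kset m s eta e.
Proof.
move=> q [h1 h2]; split.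
  by move=> i; case/andP: (h1 i) => a c; rewrite !ltW.
by move=> i j ij; rewrite ltW // h2.
Qed.

Lemma closure_Qset (R : realType) m (s eta e : R) :
  closure (@Qset R m s eta e) `<=` Kset m s eta e.
Proof. by move=> q; apply: closed_sub_key; [exact: Kset_closed | exact: Qset_Kset]. Qed.

Lemma Kset_compact (R : realType) m (s eta e : R) : 0 < eta -> 0 < e < 1 ->
  compact (Kset m s eta e).
Proof.
move=> eta0 he; apply: bounded_closed_compact; last exact: Kset_closed.
have L0 := ell_pos s he.
exists (eta^-1 * ell s e); split; first by rewrite num_real.
move=> M hM q [hq _].
rewrite /= [X in X <= _]mx_normrE.
apply: bigmax_le => [|[i1 i2] _] /=; first by apply: ltW; apply: lt_trans hM; rewrite mulr_gt0 ?invr_gt0.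
case/andP: (hq i2) => h1 h2.
have -> : i1 = ord0 by apply: ord1.
rewrite ger0_norm; last by apply: le_trans h1; rewrite mulr_ge0 ?ltW.
exact/ltW/(le_lt_trans h2).
Qed.

Definition trm' (R : realType) (s alpha beta : R) (U : R -> R) (e d x : R) :=
  alpha * U x + phi s beta e (Num.max `|x| d).

Definition Xi' (R : realType) m (s alpha beta : R) (U : R -> R) (e d : R) (q : 'rV[R]_m) : R :=
  \sum_(i < m) trm' s alpha beta U e d (2 * q ord0 i)
  + \sum_(i < m) \sum_(j < m | j != i) trm' s alpha beta U e d (q ord0 i - q ord0 j)
  + \sum_(i < m) \sum_(j < m | j != i) trm' s alpha beta U e d (q ord0 i + q ord0 j).
Arguments Xi' {R} m s alpha beta U e d q.

Lemma phi_max_cont (R : realType) (s beta e d : R) : 0 < d -> 0 < e ->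
  continuous (fun x : R => phi s beta e (Num.max `|x| d)).
Proof.
move=> d0 e0.
pose G := if s == 2^-1 then (fun z => beta / ln e^-1 * ln z)
          else (fun z => beta * e `^ (2 * s - 1) * expR ((2 * s - 1) * ln z)).
have E : (fun x : R => phi s beta e (Num.max `|x| d)) = (fun x : R => G (Num.max `|x| d)).
  apply/funext => x; have z0 : 0 < Num.max `|x| d by rewrite lt_max d0 orbT.
  rewrite /phi /G (gtr0_norm z0); case: ifP => // _; rewrite (@powR_posE _ (Num.max `|x| d)) //.
rewrite E => x.
have z0 : 0 < Num.max `|x| d by rewrite lt_max d0 orbT.
apply: (@continuous_comp _ _ _ (fun x : R => Num.max `|x| d) G).
  apply: (@continuous_max _ _ (fun x : R => `|x|) (fun=> d)).
    exact: norm_continuous.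
  exact: cvg_cst.
rewrite /G; case: ifP => _.
  apply: cvgM; [exact: cvg_cst | exact: continuous_ln].
apply: cvgM; first exact: cvg_cst.
apply: (@continuous_comp _ _ _ (fun z : R => (2 * s - 1) * ln z) expR).
  apply: cvgM; [exact: cvg_cst | exact: continuous_ln].
exact: continuous_expR.
Qed.

Lemma trm'_cont (R : realType) (s alpha beta : R) (U : R -> R) (e d : R) :
  continuous U -> 0 < d -> 0 < e -> continuous (trm' s alpha beta U e d).
Proof.
move=> cU d0 e0 x; apply: cvgD.
  apply: cvgM; [exact: cvg_cst | exact: cU].
exact: phi_max_cont.
Qed.

Lemma Xi'_cont (R : realType) m (s alpha beta : R) (U : R -> R) (e d : R) :
  continuous U -> 0 < d -> 0 < e -> continuous (Xi' m s alpha beta U e d).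
Proof.
move=> cU d0 e0; have cT := @trm'_cont _ s alpha beta U e d cU d0 e0.
have cc1 : forall i : 'I_m, continuous (fun q : 'rV[R]_m => q ord0 i) by move=> i; exact: coord_cont.
pose S1 := fun q : 'rV[R]_m => \sum_(i < m) trm' s alpha beta U e d (2 * q ord0 i).
pose S2 := fun q : 'rV[R]_m => \sum_(i < m) \sum_(j < m | j != i) trm' s alpha beta U e d (q ord0 i - q ord0 j).
pose S3 := fun q : 'rV[R]_m => \sum_(i < m) \sum_(j < m | j != i) trm' s alpha beta U e d (q ord0 i + q ord0 j).
have c1 : continuous S1.
  rewrite /S1.
  apply: cont_sum => i p.
  apply: (@continuous_comp _ _ _ (fun q : 'rV[R]_m => 2 * q ord0 i)); last exact: cT.
  by apply: (@cvgM _ _ (nbhs p) _ (fun=> 2) (fun q : 'rV[R]_m => q ord0 i)); [exact: cvg_cst | exact: cc1].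
have c2 : continuous S2.
  rewrite /S2.
  apply: cont_sum => i.
  apply: cont_sum => j p.
  apply: (@continuous_comp _ _ _ (fun q : 'rV[R]_m => q ord0 i - q ord0 j)); last exact: cT.
  by apply: (@cvgB _ _ _ (nbhs p) _ (fun q : 'rV[R]_m => q ord0 i) (fun q => q ord0 j)); exact: cc1.
have c3 : continuous S3.
  rewrite /S3.
  apply: cont_sum => i.
  apply: cont_sum => j p.
  apply: (@continuous_comp _ _ _ (fun q : 'rV[R]_m => q ord0 i + q ord0 j)); last exact: cT.
  by apply: (@cvgD _ _ _ (nbhs p) _ (fun q : 'rV[R]_m => q ord0 i) (fun q => q ord0 j)); exact: cc1.
move=> q; rewrite (_ : Xi' m s alpha beta U e d = fun q => S1 q + S2 q + S3 q) //.
apply: (@cvgD _ _ _ (nbhs q) _ (fun q => S1 q + S2 q) S3); last exact: c3.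
by apply: (@cvgD _ _ _ (nbhs q) _ S1 S2); [exact: c1 | exact: c2].
Qed.

Lemma trm_eq (R : realType) (s alpha beta : R) (U : R -> R) (e d x : R) :
  d <= `|x| -> trm s alpha beta U e x = trm' s alpha beta U e d x.
Proof.
move=> h; rewrite /trm /trm' /phi.
by rewrite (ger0_norm (_ : 0 <= Num.max `|x| d)) ?le_max ?normr_ge0 // max_l.
Qed.

Lemma Xi_eq (R : realType) m (s alpha beta eta : R) (U : R -> R) (e : R) q :
  0 < eta -> 0 < e < 1 -> Kset m s eta e q ->
  @Xi R m s alpha beta U e q = Xi' m s alpha beta U e (eta * ell s e) q.
Proof.
move=> eta0 he [h1 h2]; have L0 := ell_pos s he.
have d0 : 0 < eta * ell s e by rewrite mulr_gt0.
have hq : forall i, eta * ell s e <= q ord0 i by move=> i; case/andP: (h1 i).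
rewrite /Xi /Xi'; congr (_ + _ + _); apply: eq_bigr => i _.
- apply: trm_eq; rewrite ger0_norm; last by rewrite mulr_ge0 // (le_trans (ltW d0)).
  have := hq i; have := ltW d0; lra.
- apply: eq_bigr => j ji; apply: trm_eq; apply: h2; by rewrite eq_sym.
- apply: eq_bigr => j ji; apply: trm_eq; rewrite ger0_norm.
    have := hq i; have := hq j; have := ltW d0; lra.
  have := hq i; have := hq j; have := ltW d0; lra.
Qed.

Lemma sum_lb (R : realType) (I : finType) (P : pred I) (F : I -> R) (d : R) :
  0 <= d -> (forall i, P i -> - d <= F i) -> - (d * #|I|%:R) <= \sum_(i | P i) F i.
Proof.
move=> d0 hF; rewrite big_mkcond /=.
apply: le_trans (_ : \sum_(i : I) (- d) <= _).
  by rewrite sumr_const mulr_natr -mulNrn.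
apply: ler_sum => i _; case: ifP => Pi; first exact: hF.
by rewrite oppr_le0.
Qed.

Lemma sum_lb1 (R : realType) (I : finType) (P : pred I) (F : I -> R) (d E : R) i0 :
  0 <= d -> (forall i, P i -> - d <= F i) -> P i0 -> E <= F i0 ->
  E - d * #|I|%:R <= \sum_(i | P i) F i.
Proof.
move=> d0 hF Pi0 hE; rewrite (bigD1 i0) //=.
apply: lerD => //; apply: sum_lb => // i /andP[Pi _]; exact: hF.
Qed.

Lemma sum3_lb (R : realType) m (F1 : 'I_m -> R) (F2 F3 : 'I_m -> 'I_m -> R) (d : R) :
  0 <= d -> (forall i, - d <= F1 i) -> (forall i j, j != i -> - d <= F2 i j) -> (forall i j, j != i -> - d <= F3 i j) ->
  (forall E i, E <= F1 i -> E - d * (2 * m%:R + 2 * m%:R ^+ 2) <=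
     \sum_(i < m) F1 i + \sum_(i < m) \sum_(j < m | j != i) F2 i j +
     \sum_(i < m) \sum_(j < m | j != i) F3 i j) /\
  (forall E i j, j != i -> E <= F2 i j -> E - d * (2 * m%:R + 2 * m%:R ^+ 2) <=
     \sum_(i < m) F1 i + \sum_(i < m) \sum_(j < m | j != i) F2 i j +
     \sum_(i < m) \sum_(j < m | j != i) F3 i j).
Proof.
move=> d0 h1 h2 h3.
have cm : #|'I_m| = m by rewrite card_ord.
have dm0 : 0 <= d * m%:R by rewrite mulr_ge0.
have s1 : - (d * m%:R) <= \sum_(i < m) F1 i.
  by have := @sum_lb R _ (fun _ => true) F1 d d0 (fun i _ => h1 i); rewrite cm.
have s2 : forall i, - (d * m%:R) <= \sum_(j < m | j != i) F2 i j.
  by move=> i; have := @sum_lb R _ (fun j => j != i) (F2 i) d d0 (fun j hj => h2 i j hj); rewrite cm.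
have s3 : forall i, - (d * m%:R) <= \sum_(j < m | j != i) F3 i j.
  by move=> i; have := @sum_lb R _ (fun j => j != i) (F3 i) d d0 (fun j hj => h3 i j hj); rewrite cm.
have s2' : - (d * m%:R * m%:R) <= \sum_(i < m) \sum_(j < m | j != i) F2 i j.
  by have := @sum_lb R _ (fun _ => true) _ (d * m%:R) dm0 (fun i _ => s2 i); rewrite cm.
have s3' : - (d * m%:R * m%:R) <= \sum_(i < m) \sum_(j < m | j != i) F3 i j.
  by have := @sum_lb R _ (fun _ => true) _ (d * m%:R) dm0 (fun i _ => s3 i); rewrite cm.
split.
  move=> E i hE.
  have : E - d * m%:R <= \sum_(i < m) F1 i.
    by have := @sum_lb1 R _ (fun _ => true) F1 d E i d0 (fun i _ => h1 i) isT hE; rewrite cm.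
  move: s2' s3'; rewrite expr2; nra.
move=> E i j ji hE.
have hi : E - d * m%:R <= \sum_(j < m | j != i) F2 i j.
  by have := @sum_lb1 R _ (fun j => j != i) (F2 i) d E j d0 (fun k hk => h2 i k hk) ji hE; rewrite cm.
have : E - d * m%:R - d * m%:R * m%:R <= \sum_(i < m) \sum_(j < m | j != i) F2 i j.
  by have := @sum_lb1 R _ (fun _ => true) _ (d * m%:R) _ i dm0 (fun k _ => s2 k) isT hi; rewrite cm.
move: s1 s3'; rewrite expr2; nra.
Qed.

Lemma term_diff (R : realType) (s alpha beta b : R) (U : R -> R) (e X0 eta mm xx yy : R) :
  2^-1 <= s < 1 -> 0 < alpha -> 0 < beta -> 0 < b -> 0 < e < 1 -> 1 <= X0 ->
  (forall x, X0 <= x -> b / 2 * Pw s x <= U x <= 2 * b * Pw s x) ->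
  0 < eta -> eta <= 2^-1 -> X0 <= eta * ell s e ->
  eta * ell s e <= xx -> ell s e <= yy -> yy <= 2 * mm * ell s e ->
  let L := ell s e in let S := Pw s L in
  let a := alpha * b / 4 in let K := beta + beta ^+ 2 / (4 * a) in
  let M0 := 2 * alpha * b + 2 * mm * beta in
  [/\ - (S * (K + M0)) <= trm s alpha beta U e xx - trm s alpha beta U e yy,
      (xx <= 2 * eta * L -> S * (a / (4 * eta ^+ 2) - K - M0) <=
          trm s alpha beta U e xx - trm s alpha beta U e yy) &
      (eta^-1 * L <= xx -> S * (beta * cc s * ln eta^-1 - M0) <=
          trm s alpha beta U e xx - trm s alpha beta U e yy)].
Proof.
move=> hs a0 b0 bb0 he X1 hU eta0 eta2 XL hx hy1 hy2 L S a K M0.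
have L0 : 0 < L := ell_pos s he.
have S0 : 0 < S by exact: expR_gt0.
have eta1 : eta <= 1 by apply: le_trans eta2 _; rewrite invf_le1 // ler1n.
have xX : X0 <= xx by apply: le_trans hx.
have yX : X0 <= yy.
  apply: le_trans XL (le_trans _ hy1); rewrite -[X in _ <= X]mul1r ler_pM2r //.
have [lo1 lo2 _] := trm_est hs a0 b0 bb0 he X1 hU xX.
have [_ _ up] := trm_est hs a0 b0 bb0 he X1 hU yX.
rewrite -/L -/S -/a -/K in lo1 lo2 up.
set cl := cL s beta L in lo1 lo2 up.
set t := xx / L in lo1 lo2.
set t0 := yy / L in up.
have t0_1 : 1 <= t0 by rewrite /t0 ler_pdivlMr // mul1r.
have t0_2 : t0 <= 2 * mm by rewrite /t0 ler_pdivrMr.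
have s0 : 0 <= s by apply: le_trans (proj1 (andP hs)); rewrite invr_ge0.
have P1 := Pw_le1 s0 t0_1.
have h1 := hh_le hs t0_1.
have up' : trm s alpha beta U e yy <= S * (cl + M0).
  apply: le_trans up _; rewrite ler_pM2l // /M0.
  have : 2 * alpha * b * Pw s t0 <= 2 * alpha * b by rewrite -[X in _ <= X]mulr1 ler_pM2l ?mulr_gt0.
  have : beta * hh s t0 <= beta * (2 * mm) by rewrite ler_pM2l //; apply: le_trans h1 t0_2.
  lra.
have t0pos : 0 < t by rewrite divr_gt0 // (lt_le_trans _ hx) // mulr_gt0.
have aP : 0 <= a * Pw s t by rewrite mulr_ge0 ?Pw_ge0 // ltW // /a !mulr_gt0.
split.
- have : S * (cl - K) <= S * (cl + a * Pw s t - K) by rewrite ler_pM2l //; lra.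
  have -> : - (S * (K + M0)) = S * (cl - K) - S * (cl + M0) by ring.
  lra.
- move=> hx2.
  have tle : t <= 2 * eta by rewrite /t ler_pdivrMr.
  have t1 : t <= 1 by lra.
  have hP := Pw_ge (proj1 (andP hs)) t0pos t1.
  have hP2 : (4 * eta ^+ 2)^-1 <= (t ^+ 2)^-1.
    rewrite lef_pV2; first by rewrite !expr2; nra.
      by rewrite posrE mulr_gt0 // exprn_gt0.
    by rewrite posrE exprn_gt0.
  have : a / (4 * eta ^+ 2) <= a * Pw s t.
    have apos : 0 < a by rewrite /a divr_gt0 ?mulr_gt0.
    by rewrite ler_pM2l //; exact: le_trans hP2 hP.
  move=> ha.
  have : S * (a / (4 * eta ^+ 2) - K + cl) <= S * (cl + a * Pw s t - K) by rewrite ler_pM2l //; lra.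
  have -> : S * (a / (4 * eta ^+ 2) - K - M0) = S * (a / (4 * eta ^+ 2) - K + cl) - S * (cl + M0) by ring.
  lra.
- move=> hx2.
  have tle : eta^-1 <= t by rewrite /t ler_pdivlMr.
  have hl : ln eta^-1 <= ln t by rewrite ler_ln ?posrE ?invr_gt0.
  have c0 : 0 < cc s by have /andP[] := cc_gt0 hs.
  have : beta * cc s * ln eta^-1 <= beta * (cc s * ln t).
    by rewrite -mulrA ler_pM2l // ler_pM2l.
  move=> hb.
  have : S * (beta * cc s * ln eta^-1 + cl) <= S * (cl + beta * (cc s * ln t)) by rewrite ler_pM2l //; lra.
  have -> : S * (beta * cc s * ln eta^-1 - M0) = S * (beta * cc s * ln eta^-1 + cl) - S * (cl + M0) by ring.
  lra.
Qed.

Lemma nat_lt_R (R : realType) (p q : nat) : (p < q)%N -> 1 <= (q%:R - p%:R : R).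
Proof.
move=> h; have : (p.+1%:R <= q%:R :> R) by rewrite ler_nat.
rewrite -addn1 natrD; lra.
Qed.

Lemma nat_dist (R : realType) (p q : nat) : p != q -> 1 <= `|p%:R - q%:R : R|.
Proof.
case: (ltngtP p q) => h // _.
  by apply: le_trans (nat_lt_R R h) _; rewrite distrC; exact: ler_norm.
by apply: le_trans (nat_lt_R R h) _; exact: ler_norm.
Qed.

Lemma trm_abs (R : realType) (s alpha beta : R) (U : R -> R) (e x : R) :
  (forall x, U (- x) = U x) -> trm s alpha beta U e x = trm s alpha beta U e `|x|.
Proof.
move=> hU; rewrite /trm /phi normr_id.
by case: (ler0P x) => hx; rewrite ?(ler0_norm hx) ?(gtr0_norm hx) ?hU.
Qed.

Lemma diff3 (R : realType) m (f1 g1 : 'I_m -> R) (f2 g2 f3 g3 : 'I_m -> 'I_m -> R) :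
  (\sum_(i < m) f1 i + \sum_(i < m) \sum_(j < m | j != i) f2 i j
     + \sum_(i < m) \sum_(j < m | j != i) f3 i j)
  - (\sum_(i < m) g1 i + \sum_(i < m) \sum_(j < m | j != i) g2 i j
     + \sum_(i < m) \sum_(j < m | j != i) g3 i j)
  = \sum_(i < m) (f1 i - g1 i) + \sum_(i < m) \sum_(j < m | j != i) (f2 i j - g2 i j)
     + \sum_(i < m) \sum_(j < m | j != i) (f3 i j - g3 i j).
Proof.
have E : forall f g : 'I_m -> 'I_m -> R,
  \sum_(i < m) \sum_(j < m | j != i) (f i j - g i j) =
  \sum_(i < m) \sum_(j < m | j != i) f i j - \sum_(i < m) \sum_(j < m | j != i) g i j.
  by move=> f g; rewrite -sumrB; apply: eq_bigr => i _; rewrite sumrB.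
rewrite sumrB !E; lra.
Qed.

Unset Implicit Arguments.

Theorem lemma8p1 (R : realType) (s : R) (m : nat) (alpha beta b : R) (U : R -> R) :
  2^-1 <= s < 1 -> (1 <= m)%N -> 0 < alpha -> 0 < beta ->
  ground_state_props s U b ->
  exists2 eta0 : R, 0 < eta0 & forall eta : R, 0 < eta < eta0 ->
  exists2 eps0 : R, 0 < eps0 & forall eps : R, 0 < eps < eps0 ->
  exists q : 'rV[R]_m,
    [/\ closure (@Qset R m s eta eps) q,
        @Qset R m s eta eps q &
        forall p, closure (@Qset R m s eta eps) p ->
          @Xi R m s alpha beta U eps q <= @Xi R m s alpha beta U eps p].
Proof.
move=> hs m1 a0 b0 hU.
have [cU Uev Upos bb0 _] := hU.
have s0 : 0 <= s by case/andP: hs => h _; apply: le_trans h; rewrite invr_ge0.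
have [X0 [X1 hUb]] := U_bounds hU s0.
have X0pos : 0 < X0 by apply: lt_le_trans X1.
set mm : R := m%:R.
have mm1 : 1 <= mm by rewrite /mm ler1n.
set a := alpha * b / 4.
have apos : 0 < a by rewrite /a divr_gt0 ?mulr_gt0.
set K := beta + beta ^+ 2 / (4 * a).
have Kpos : 0 < K.
  have : 0 <= beta ^+ 2 / (4 * a) by rewrite divr_ge0 ?sqr_ge0 // mulr_ge0 // ltW.
  rewrite /K; lra.
set M0 := 2 * alpha * b + 2 * mm * beta.
have M0pos : 0 < M0.
  have : 0 < alpha * b by rewrite mulr_gt0.
  have : 0 < mm * beta by rewrite mulr_gt0 //; lra.
  rewrite /M0; lra.
set D := K + M0.
set W := 2 * mm + 2 * mm ^+ 2.
have Wpos : 0 < W by rewrite /W addr_gt0 ?mulr_gt0 ?exprn_gt0 //; lra.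
set Mtot := M0 + D * W.
have Mpos : 0 < Mtot by rewrite /Mtot addr_gt0 // mulr_gt0 // /D addr_gt0.
set c := cc s.
have c0 : 0 < c by have /andP[] := cc_gt0 hs.
set eta0 := Num.min (Num.min (2 * mm)^-1 (expR (- (Mtot / (beta * c)))))
   (a / (4 * (Mtot + K))).
exists eta0.
  have h1 : 0 < (2 * mm)^-1 by rewrite invr_gt0; lra.
  have h2 : 0 < a / (4 * (Mtot + K)) by rewrite divr_gt0 // mulr_gt0 // addr_gt0.
  by rewrite !lt_min expR_gt0 h1 h2.
move=> eta /andP[eta_pos]; rewrite !lt_min => /andP[/andP[eta_m eta_e] eta_a].
have h2m : 0 < 2 * mm by lra.
have eta2m : eta * (2 * mm) < 1.
  by move: eta_m; rewrite -(ltr_pM2r h2m) mulVf // gt_eqF.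
have eta2 : eta <= 2^-1.
  have : eta * mm < 2^-1 by lra.
  move=> h; apply: le_trans (ltW h); rewrite -[X in X <= _]mulr1 ler_pM2l //.
have eta1 : eta <= 1 by lra.
have mm_eta : mm <= eta^-1.
  by rewrite -(ler_pM2l eta_pos) mulfV ?gt_eqF //; lra.
have bound_a : Mtot < beta * c * ln eta^-1.
  have h : ln eta < - (Mtot / (beta * c)).
    by rewrite -[X in _ < X]expRK ltr_ln ?posrE ?expR_gt0.
  rewrite lnV ?posrE //.
  have -> : Mtot = beta * c * (Mtot / (beta * c)) by rewrite mulrC divfK // gt_eqF // mulr_gt0.
  by rewrite ltr_pM2l ?mulr_gt0 //; lra.
have bound_b : Mtot + K < a / (4 * eta ^+ 2).
  have hQ : 0 < Mtot + K by rewrite addr_gt0.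
  have h4Q : 0 < 4 * (Mtot + K) by rewrite mulr_gt0.
  have h : eta * (4 * (Mtot + K)) < a by rewrite -ltr_pdivlMr.
  rewrite ltr_pdivlMr; last by rewrite mulr_gt0 // exprn_gt0.
  rewrite expr2; nra.
have T0 : 0 < X0 / eta by rewrite divr_gt0.
have [e0 e0pos he0] := ell_large hs T0.
exists e0 => [//|e /andP[epos elt]].
have hee : 0 < e < e0 by rewrite epos elt.
have [e1 hL] := he0 e hee.
have he : 0 < e < 1 by rewrite epos e1.
have L0 : 0 < ell s e := ell_pos s he.
set L := ell s e in hL L0 *.
have XL : X0 <= eta * L.
  by move: hL; rewrite ltr_pdivrMr // mulrC => /ltW.
set d := eta * L.
have d0 : 0 < d by rewrite mulr_gt0.
set S := Pw s L.
have S0 : 0 < S by exact: expR_gt0.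
pose w (i : 'I_m) : R := (i.+1)%:R.
have w1 : forall i, 1 <= w i by move=> i; rewrite /w ler1n.
have wm : forall i, w i <= mm by move=> i; rewrite /w /mm ler_nat ltn_ord.
pose q0 : 'rV[R]_m := \row_i (w i * L).
have q0E : forall i, q0 ord0 i = w i * L by move=> i; rewrite /q0 mxE.
have wd : forall i j : 'I_m, i != j -> 1 <= `|w i - w j|.
  by move=> i j ij; apply: nat_dist; rewrite eqSS.
have Kq0 : Kset m s eta e q0.
  split.
    move=> i; rewrite q0E; apply/andP; split; rewrite ler_pM2r //.
      by apply: le_trans eta1 (w1 i).
    by apply: le_trans (wm i) mm_eta.
  move=> i j ij; rewrite !q0E -mulrBl normrM (gtr0_norm L0) ler_pM2r //.
  by apply: le_trans eta1 (wd i j ij).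
have Kne : Kset m s eta e !=set0 by exists q0.
have cXi' : {within Kset m s eta e, continuous (Xi' m s alpha beta U e d)}.
  by apply: continuous_subspaceT; exact: (@Xi'_cont R m s alpha beta U e d cU d0 epos).
have [cmin cK cminP] := EVT_min_rV Kne (Kset_compact eta_pos he) cXi'.
move: cK; rewrite in_setE => cK.
have minP : forall p, Kset m s eta e p ->
    @Xi R m s alpha beta U e cmin <= @Xi R m s alpha beta U e p.
  move=> p hp; rewrite (Xi_eq alpha beta U eta_pos he cK) (Xi_eq alpha beta U eta_pos he hp).
  by apply: cminP; rewrite in_setE.
have TD : forall xx yy, d <= xx -> L <= yy -> yy <= 2 * mm * L ->
  [/\ - (S * (K + M0)) <= trm s alpha beta U e xx - trm s alpha beta U e yy,
      (xx <= 2 * eta * L -> S * (a / (4 * eta ^+ 2) - K - M0) <=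
          trm s alpha beta U e xx - trm s alpha beta U e yy) &
      (eta^-1 * L <= xx -> S * (beta * cc s * ln eta^-1 - M0) <=
          trm s alpha beta U e xx - trm s alpha beta U e yy)].
  move=> xx yy h1 h2 h3.
  exact: (term_diff hs a0 b0 bb0 he X1 hUb eta_pos eta2 XL h1 h2 h3).

have XiD : forall p : 'rV[R]_m,
  @Xi R m s alpha beta U e p - @Xi R m s alpha beta U e q0 =
  \sum_(i < m) (trm s alpha beta U e (2 * p ord0 i) - trm s alpha beta U e (2 * q0 ord0 i))
  + \sum_(i < m) \sum_(j < m | j != i) (trm s alpha beta U e (p ord0 i - p ord0 j)
                                        - trm s alpha beta U e (q0 ord0 i - q0 ord0 j))
  + \sum_(i < m) \sum_(j < m | j != i) (trm s alpha beta U e (p ord0 i + p ord0 j)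
                                        - trm s alpha beta U e (q0 ord0 i + q0 ord0 j)).
  move=> p.
  exact: (diff3 (fun i => trm s alpha beta U e (2 * p ord0 i))
                (fun i => trm s alpha beta U e (2 * q0 ord0 i))
                (fun i j => trm s alpha beta U e (p ord0 i - p ord0 j))
                (fun i j => trm s alpha beta U e (q0 ord0 i - q0 ord0 j))
                (fun i j => trm s alpha beta U e (p ord0 i + p ord0 j))
                (fun i j => trm s alpha beta U e (q0 ord0 i + q0 ord0 j))).
have y1 : forall i, L <= `|2 * q0 ord0 i| /\ `|2 * q0 ord0 i| <= 2 * mm * L.
  move=> i; rewrite q0E; have := w1 i; have := wm i => h1 h2.
  rewrite ger0_norm; last by rewrite !mulr_ge0 // ?ltW //; lra.
  split; nra.
have y2 : forall i j, j != i -> L <= `|q0 ord0 i - q0 ord0 j| /\ `|q0 ord0 i - q0 ord0 j| <= 2 * mm * L.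
  move=> i j ji; rewrite !q0E -mulrBl normrM (gtr0_norm L0).
  have ij : i != j by rewrite eq_sym.
  have h0 := wd i j ij.
  have : `|w i - w j| <= 2 * mm.
    rewrite ler_norml; have := w1 i; have := wm i; have := w1 j; have := wm j; lra.
  move=> h3; split; nra.
have y3 : forall i j, L <= `|q0 ord0 i + q0 ord0 j| /\ `|q0 ord0 i + q0 ord0 j| <= 2 * mm * L.
  move=> i j; rewrite !q0E -mulrDl normrM (gtr0_norm L0).
  have := w1 i; have := wm i; have := w1 j; have := wm j => h1 h2 h3 h4.
  rewrite ger0_norm; last by lra.
  split; nra.
have hpos : forall p, Kset m s eta e p -> forall i, d <= p ord0 i.
  by move=> p [h _] i; case/andP: (h i).
have x1 : forall p, Kset m s eta e p -> forall i, d <= `|2 * p ord0 i|.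
  move=> p hp i; have := hpos p hp i => h.
  rewrite ger0_norm; lra.
have x2 : forall p, Kset m s eta e p -> forall i j, j != i -> d <= `|p ord0 i - p ord0 j|.
  by move=> p [_ h] i j ji; apply: h; rewrite eq_sym.
have x3 : forall p, Kset m s eta e p -> forall i j, d <= `|p ord0 i + p ord0 j|.
  move=> p hp i j; have := hpos p hp i; have := hpos p hp j => h1 h2.
  rewrite ger0_norm; lra.
have dD : 0 <= S * (K + M0) by rewrite mulr_ge0 // ltW // addr_gt0.
have bnd : forall p, Kset m s eta e p -> forall E,
  ((exists i, E <= trm s alpha beta U e (2 * p ord0 i) - trm s alpha beta U e (2 * q0 ord0 i)) \/
   (exists i j, j != i /\ E <= trm s alpha beta U e (p ord0 i - p ord0 j)
                               - trm s alpha beta U e (q0 ord0 i - q0 ord0 j))) ->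
  E - S * (K + M0) * W <= @Xi R m s alpha beta U e p - @Xi R m s alpha beta U e q0.
  move=> p hp E hE; rewrite XiD.
  have g1 : forall i, - (S * (K + M0)) <=
      trm s alpha beta U e (2 * p ord0 i) - trm s alpha beta U e (2 * q0 ord0 i).
    move=> i; rewrite (trm_abs s alpha beta e (2 * p ord0 i) Uev).
    rewrite (trm_abs s alpha beta e (2 * q0 ord0 i) Uev).
    have [h _ _] := TD _ _ (x1 p hp i) (proj1 (y1 i)) (proj2 (y1 i)); exact: h.
  have g2 : forall i j, j != i -> - (S * (K + M0)) <=
      trm s alpha beta U e (p ord0 i - p ord0 j) - trm s alpha beta U e (q0 ord0 i - q0 ord0 j).
    move=> i j ji; rewrite (trm_abs s alpha beta e (p ord0 i - p ord0 j) Uev).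
    rewrite (trm_abs s alpha beta e (q0 ord0 i - q0 ord0 j) Uev).
    have [h _ _] := TD _ _ (x2 p hp i j ji) (proj1 (y2 i j ji)) (proj2 (y2 i j ji)); exact: h.
  have g3 : forall i j, j != i -> - (S * (K + M0)) <=
      trm s alpha beta U e (p ord0 i + p ord0 j) - trm s alpha beta U e (q0 ord0 i + q0 ord0 j).
    move=> i j ji; rewrite (trm_abs s alpha beta e (p ord0 i + p ord0 j) Uev).
    rewrite (trm_abs s alpha beta e (q0 ord0 i + q0 ord0 j) Uev).
    have [h _ _] := TD _ _ (x3 p hp i j) (proj1 (y3 i j)) (proj2 (y3 i j)); exact: h.
  have [S1 S2] := sum3_lb dD g1 g2 g3.
  case: hE => [[i hi]|[i [j [ji hij]]]].
    exact: (S1 E i hi).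
  exact: (S2 E i j ji hij).
have XiC := minP q0 Kq0.
have hQ : @Qset R m s eta e cmin.
  have [cK1 cK2] := cK.
  rewrite -/L -/d in cK1 cK2.
  rewrite /Qset /= -/L -/d.
  split.
    move=> i; have /andP[ci1 ci2] := cK1 i; apply/andP; split; rewrite ltNge; apply/negP => hb.
      have xx2 : `|2 * cmin ord0 i| <= 2 * eta * L.
        have hd : d = eta * L by [].
        rewrite ger0_norm; lra.
      have [_ hb2 _] := TD _ _ (x1 cmin cK i) (proj1 (y1 i)) (proj2 (y1 i)).
      have := bnd cmin cK (S * (a / (4 * eta ^+ 2) - K - M0)).
      move=> /(_ (or_introl (ex_intro _ i _))).
      rewrite (trm_abs s alpha beta e (2 * cmin ord0 i) Uev).
      rewrite (trm_abs s alpha beta e (2 * q0 ord0 i) Uev) => /(_ (hb2 xx2)) h.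
      have : 0 < S * (a / (4 * eta ^+ 2) - K - M0) - S * (K + M0) * W.
        have -> : S * (a / (4 * eta ^+ 2) - K - M0) - S * (K + M0) * W =
                  S * (a / (4 * eta ^+ 2) - (Mtot + K)) by rewrite /Mtot /D; ring.
        by rewrite mulr_gt0 // subr_gt0.
      lra.
    have xx2 : eta^-1 * L <= `|2 * cmin ord0 i|.
      have : 0 <= eta^-1 * L by rewrite mulr_ge0 // ltW // invr_gt0.
      rewrite ger0_norm; lra.
    have [_ _ hb3] := TD _ _ (x1 cmin cK i) (proj1 (y1 i)) (proj2 (y1 i)).
    have := bnd cmin cK (S * (beta * c * ln eta^-1 - M0)).
    move=> /(_ (or_introl (ex_intro _ i _))).
    rewrite (trm_abs s alpha beta e (2 * cmin ord0 i) Uev).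
    rewrite (trm_abs s alpha beta e (2 * q0 ord0 i) Uev) => /(_ (hb3 xx2)) h.
    have : 0 < S * (beta * c * ln eta^-1 - M0) - S * (K + M0) * W.
      have -> : S * (beta * c * ln eta^-1 - M0) - S * (K + M0) * W =
                S * (beta * c * ln eta^-1 - Mtot) by rewrite /Mtot /D; ring.
      by rewrite mulr_gt0 // subr_gt0.
    lra.
  move=> i j ij; rewrite ltNge; apply/negP => hb.
  have ji : j != i by rewrite eq_sym.
  have xx2 : `|cmin ord0 i - cmin ord0 j| <= 2 * eta * L.
    have hd : d = eta * L by [].
    rewrite -/d; lra.
  have [_ hb2 _] := TD _ _ (x2 cmin cK i j ji) (proj1 (y2 i j ji)) (proj2 (y2 i j ji)).
  have := bnd cmin cK (S * (a / (4 * eta ^+ 2) - K - M0)).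
  move=> /(_ (or_intror (ex_intro _ i (ex_intro _ j (conj ji _))))).
  rewrite (trm_abs s alpha beta e (cmin ord0 i - cmin ord0 j) Uev).
  rewrite (trm_abs s alpha beta e (q0 ord0 i - q0 ord0 j) Uev) => /(_ (hb2 xx2)) h.
  have : 0 < S * (a / (4 * eta ^+ 2) - K - M0) - S * (K + M0) * W.
    have -> : S * (a / (4 * eta ^+ 2) - K - M0) - S * (K + M0) * W =
              S * (a / (4 * eta ^+ 2) - (Mtot + K)) by rewrite /Mtot /D; ring.
    by rewrite mulr_gt0 // subr_gt0.
  lra.
exists cmin; split => //.
  exact: subset_closure.
move=> p hp; apply: minP; exact: closure_Qset hp.
Qed.
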